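(* Let $d_1$ be a positive integer, let $p_{10}<p_{11}<\cdots<p_{1d_1}$ and $p_{20}<p_{21}$ be real numbers (so $d_2=1$), and let $$S=\bigl\{(x_1,x_2,\mu)\in\mathbb{R}^2\times\mathbb{R} : \mu=x_1x_2,\ x_1\in\{p_{10},\dots,p_{1d_1}\},\ x_2\in\{p_{20},p_{21}\}\bigr\}.$$ Let $Q$ be the polyhedron of all $(x_1,x_2,\mu,\boldsymbol{z}_1,z_{21})\in\mathbb{R}^2\times\mathbb{R}\times\mathbb{R}^{d_1}\times\mathbb{R}$ satisfying $x_1=p_{10}+\sum_{j=1}^{d_1}(p_{1j}-p_{1,j-1})z_{1j}$, $1\ge z_{11}\ge\cdots\ge z_{1d_1}\ge 0$, $x_2=p_{20}+(p_{21}-p_{20})z_{21}$, $1\ge z_{21}\ge0$, and, for every $k\in\{0,1,\dots,d_1\}$, \begin{align*} \mu&\le p_{10}p_{20}+\textstyle\sum_{j=1}^{k}p_{20}(p_{1j}-p_{1,j-1})z_{1j}+p_{1k}(p_{21}-p_{20})z_{21}+\sum_{j=k+1}^{d_1}p_{21}(p_{1j}-p_{1,j-1})z_{1j},\\ \mu&\ge p_{10}p_{21}+\textstyle\sum_{j=1}^{k}p_{21}(p_{1j}-p_{1,j-1})z_{1j}+p_{1k}(p_{20}-p_{21})(1-z_{21})+\sum_{j=k+1}^{d_1}p_{20}(p_{1j}-p_{1,j-1})z_{1j}. \end{align*} Then $E=\{(x_1,x_2,\mu,\boldsymbol{z}_1,z_{21})\in Q:(\boldsymbol{z}_1,z_{21})\in\{0,1\}^{d_1+1}\}$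 is an ideal MIP formulation of $S$.
   Context: An MIP formulation of a set $S$ is a set $E=\{(\boldsymbol{x},\boldsymbol{y},\boldsymbol{z})\in Q:\boldsymbol{z}\in\{0,1\}^q\}$, $Q$ a polyhedron, whose projection onto the original variables $\boldsymbol{x}$ equals $S$. It is ideal if every vertex of the LP relaxation $Q$ has $\boldsymbol{z}\in\{0,1\}^q$. *)

(* Defs.v *)
From mathcomp Require Import all_boot all_order all_algebra.
Set Implicit Arguments. Unset Strict Implicit. Unset Printing Implicit Defensive.
Import Order.TTheory GRing.Theory Num.Theory.
Local Open Scope ring_scope.

Definition is_vertex (R : realFieldType) (n : nat) (Q : 'rV[R]_n -> Prop)
    (v : 'rV[R]_n) : Prop :=
  Q v /\ forall (a b : 'rV[R]_n) (t : R), Q a -> Q b -> 0 < t < 1 ->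
    v = t *: a + (1 - t) *: b -> a = b.

Definition is_binary (R : realFieldType) (q : nat) (z : 'rV[R]_q) : Prop :=
  forall i : 'I_q, z 0 i = 0 \/ z 0 i = 1.

(* E = {(x,z) in Q : z binary} is an MIP formulation of S (no auxiliary
   continuous variables y here): its projection onto x equals S. *)
Definition mip_formulation (R : realFieldType) (n q : nat)
    (S : 'rV[R]_n -> Prop) (Q : 'rV[R]_(n + q) -> Prop) : Prop :=
  forall x : 'rV[R]_n, S x <-> exists z : 'rV[R]_q, is_binary z /\ Q (row_mx x z).

Definition ideal_formulation (R : realFieldType) (n q : nat)
    (Q : 'rV[R]_(n + q) -> Prop) : Prop :=
  forall v, is_vertex Q v -> is_binary (rsubmx v).

Definition c0 : 'I_3 := @Ordinal 3 0 isT.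
Definition c1 : 'I_3 := @Ordinal 3 1 isT.
Definition c2 : 'I_3 := @Ordinal 3 2 isT.

Definition S_set (R : realFieldType) (d1 : nat) (p1 : 'I_d1.+1 -> R)
    (p20 p21 : R) (x : 'rV[R]_3) : Prop :=
  x 0 c2 = x 0 c0 * x 0 c1 /\ (exists k : 'I_d1.+1, x 0 c0 = p1 k) /\
  (x 0 c1 = p20 \/ x 0 c1 = p21).

(* p1_j - p1_{j-1} for j = i+1, i : 'I_d1 *)
Definition dp (R : realFieldType) (d1 : nat) (p1 : 'I_d1.+1 -> R) (i : 'I_d1) : R :=
  p1 (lift ord0 i) - p1 (widen_ord (leqnSn d1) i).

(* The polyhedron Q, points v = (x1,x2,mu | z_11..z_1d1, z_21);
   z_1j is stored at index j-1 of the z-block, z_21 at the last index. *)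
Definition Q_set (R : realFieldType) (d1 : nat) (p1 : 'I_d1.+1 -> R)
    (p20 p21 : R) (v : 'rV[R]_(3 + d1.+1)) : Prop :=
  let x1 := lsubmx v 0 c0 in
  let x2 := lsubmx v 0 c1 in
  let mu := lsubmx v 0 c2 in
  let z1 := fun i : 'I_d1 => rsubmx v 0 (widen_ord (leqnSn d1) i) in
  let z21 := rsubmx v 0 ord_max in
  [/\ x1 = p1 ord0 + \sum_(i < d1) dp p1 i * z1 i,
      (forall i : 'I_d1, 0 <= z1 i <= 1) /\
      (forall i j : 'I_d1, nat_of_ord j = i.+1 -> z1 j <= z1 i),
      x2 = p20 + (p21 - p20) * z21,
      0 <= z21 <= 1 &
      forall k : 'I_d1.+1,
        mu <= p1 ord0 * p20
              + \sum_(i < d1 | (i < k)%N) p20 * dp p1 i * z1 i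
              + p1 k * (p21 - p20) * z21
              + \sum_(i < d1 | (k <= i)%N) p21 * dp p1 i * z1 i /\
        mu >= p1 ord0 * p21
              + \sum_(i < d1 | (i < k)%N) p21 * dp p1 i * z1 i
              + p1 k * (p20 - p21) * (1 - z21)
              + \sum_(i < d1 | (k <= i)%N) p20 * dp p1 i * z1 i].

(* Main.v *)
Require Import Defs.
From mathcomp Require Import all_boot all_order all_algebra.
From mathcomp Require Import ring lra.
Import Order.TTheory GRing.Theory Num.Theory.
Set Implicit Arguments. Unset Strict Implicit. Unset Printing Implicit Defensive.
Local Open Scope ring_scope.

Section P.
Variable R : realFieldType.
Variable d1 : nat.
Variable p1 : 'I_d1.+1 -> R.
Variables p20 p21 : R.
Hypothesis hp1 : forall i j : 'I_d1.+1, (i < j)%N -> p1 i < p1 j.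
Hypothesis hp2 : p20 < p21.

Local Notation dp := (dp p1).
Local Notation wd i := (widen_ord (leqnSn d1) i).

Lemma dp_gt0 i : 0 < dp i.
Proof. rewrite /Defs.dp subr_gt0; apply: hp1. by rewrite lift0. Qed.
Lemma tel (k : 'I_d1.+1) : p1 k = p1 ord0 + \sum_(i < d1 | (i < k)%N) dp i.
Proof.
pose f n := p1 (inord n).
have E : \sum_(i < d1 | (i < k)%N) dp i = \sum_(i < d1 | (i < k)%N) (f i.+1 - f i).
  apply: eq_bigr => i _; rewrite /Defs.dp /f; congr (p1 _ - p1 _); apply: val_inj.
    by change (nat_of_ord (lift ord0 i) = nat_of_ord (inord i.+1 : 'I_d1.+1)); rewrite lift0 inordK // ltnS.
  by change (nat_of_ord i = nat_of_ord (inord i : 'I_d1.+1)); rewrite inordK // ltnW // ltnS.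
have kle : (k <= d1)%N by rewrite -ltnS.
rewrite E -(big_ord_widen d1 (fun n => f n.+1 - f n) kle).
have T := telescope_sumr f (leq0n k); rewrite big_mkord in T.
rewrite T /f inord_val.
have -> : (inord 0 : 'I_d1.+1) = ord0 by apply: val_inj; change (nat_of_ord (inord 0 : 'I_d1.+1) = 0%N); rewrite inordK.
by rewrite addrC subrK.
Qed.
Definition Fk (k : 'I_d1.+1) (z : 'I_d1 -> R) (c : R) :=
  p1 k * c + \sum_(i < d1 | (k <= i)%N) dp i * z i.

Lemma FkE k z c : Fk k z c = p1 ord0 * c + \sum_(i < d1) dp i * (if (i < k)%N then c else z i).
Proof.
rewrite /Fk tel mulrDl mulr_suml [in RHS](bigID (fun i : 'I_d1 => (i < k)%N)) /= addrA.
congr (_ + _ + _).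
  by apply: eq_bigr => i ->.
rewrite [in RHS](eq_bigl (fun i : 'I_d1 => (k <= i)%N)); last by move=> i; rewrite -leqNgt.
by apply: eq_bigr => i; rewrite leqNgt => /negbTE ->.
Qed.

Lemma Fk_min (k j : 'I_d1.+1) (z : 'I_d1 -> R) (c : R) : (forall i : 'I_d1, (i < k)%N -> c <= z i) ->
  (forall i : 'I_d1, (k <= i)%N -> z i <= c) -> Fk k z c <= Fk j z c.
Proof.
move=> h1 h2; rewrite !FkE lerD2l; apply: ler_sum => i _; rewrite ler_pM2l ?dp_gt0 //.
case: (ltnP i k) => hk; case: (ltnP i j) => hj //; auto.
Qed.

Lemma pair_ok (k j : 'I_d1.+1) (z : 'I_d1 -> R) (y : R) : (forall i, 0 <= z i <= 1) -> 0 <= y <= 1 ->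
  p21 * (p1 ord0 + \sum_(i < d1) dp i * z i) - (p21 - p20) * Fk j z (1 - y)
  <= p20 * (p1 ord0 + \sum_(i < d1) dp i * z i) + (p21 - p20) * Fk k z y.
Proof.
move=> hz /andP [hy0 hy1].
have H : p1 ord0 + \sum_(i < d1) dp i * z i <= Fk k z y + Fk j z (1 - y).
  have : \sum_(i < d1) dp i * z i <= \sum_(i < d1) (dp i * (if (i < k)%N then y else z i)
          + dp i * (if (i < j)%N then 1 - y else z i)).
    apply: ler_sum => i _; rewrite -mulrDr ler_pM2l ?dp_gt0 //.
    have /andP [z0 z1] := hz i.
    by case: (ltnP i k) => _; case: (ltnP i j) => _; lra.
  rewrite big_split /= !FkE mulrBr mulr1; lra.
move: H; set X := p1 ord0 + _; set F1 := Fk k z y; set F2 := Fk j z (1 - y) => H.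
rewrite -subr_ge0.
have -> : p20 * X + (p21 - p20) * F1 - (p21 * X - (p21 - p20) * F2) = (p21 - p20) * (F1 + F2 - X) by ring.
by apply: mulr_ge0; rewrite subr_ge0 // ltW.
Qed.


Definition QN2 (x1 x2 mu : R) (z : 'I_d1 -> R) (y : R) : Prop :=
  [/\ x1 = p1 ord0 + \sum_(i < d1) dp i * z i,
      (forall i : 'I_d1, 0 <= z i <= 1) /\
      (forall i j : 'I_d1, nat_of_ord j = i.+1 -> z j <= z i),
      x2 = p20 + (p21 - p20) * y,
      0 <= y <= 1 &
      forall k, mu <= p20 * x1 + (p21 - p20) * Fk k z y /\
                p21 * x1 - (p21 - p20) * Fk k z (1 - y) <= mu].

Lemma Fk_ext k (z z' : 'I_d1 -> R) c : (forall i, z i = z' i) -> Fk k z c = Fk k z' c.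
Proof. by move=> E; rewrite /Fk; congr (_ + _); apply: eq_bigr => i _; rewrite E. Qed.

Lemma QN2_ext x1 x2 mu (z z' : 'I_d1 -> R) y : (forall i, z i = z' i) ->
  QN2 x1 x2 mu z y -> QN2 x1 x2 mu z' y.
Proof.
move=> E [h1 [hb hm] h3 h4 h5]; split => //.
- by rewrite h1; congr (_ + _); apply: eq_bigr => i _; rewrite E.
- by split => [i|i j hij]; rewrite -!E; auto.
- by move=> k; rewrite -!(Fk_ext _ _ E); apply: h5.
Qed.

Lemma splitA (k : 'I_d1.+1) (z : 'I_d1 -> R) :
  \sum_(i < d1) dp i * z i = \sum_(i < d1 | (i < k)%N) dp i * z i + \sum_(i < d1 | (k <= i)%N) dp i * z i.
Proof.
rewrite (bigID (fun i : 'I_d1 => (i < k)%N)) /=; congr (_ + _).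
by apply: eq_bigl => i; rewrite -leqNgt.
Qed.

Lemma sum_cst (P : pred 'I_d1) (a : R) (z : 'I_d1 -> R) :
  \sum_(i < d1 | P i) a * dp i * z i = a * \sum_(i < d1 | P i) dp i * z i.
Proof. by rewrite mulr_sumr; apply: eq_bigr => i _; rewrite mulrA. Qed.

Lemma UE (k : 'I_d1.+1) (z : 'I_d1 -> R) x1 y : x1 = p1 ord0 + \sum_(i < d1) dp i * z i ->
  p1 ord0 * p20 + \sum_(i < d1 | (i < k)%N) p20 * dp i * z i + p1 k * (p21 - p20) * y
    + \sum_(i < d1 | (k <= i)%N) p21 * dp i * z i
  = p20 * x1 + (p21 - p20) * Fk k z y.
Proof.
move=> ->; rewrite /Fk (splitA k) !sum_cst.
set A := \sum_(i < d1 | (i < k)%N) _; set B := \sum_(i < d1 | (k <= i)%N) _.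
ring.
Qed.

Lemma LE (k : 'I_d1.+1) (z : 'I_d1 -> R) x1 y : x1 = p1 ord0 + \sum_(i < d1) dp i * z i ->
  p1 ord0 * p21 + \sum_(i < d1 | (i < k)%N) p21 * dp i * z i + p1 k * (p20 - p21) * (1 - y)
    + \sum_(i < d1 | (k <= i)%N) p20 * dp i * z i
  = p21 * x1 - (p21 - p20) * Fk k z (1 - y).
Proof.
move=> ->; rewrite /Fk (splitA k) !sum_cst.
set A := \sum_(i < d1 | (i < k)%N) _; set B := \sum_(i < d1 | (k <= i)%N) _.
ring.
Qed.

Lemma QE v : Q_set p1 p20 p21 v <->
  QN2 (lsubmx v 0 c0) (lsubmx v 0 c1) (lsubmx v 0 c2) (fun i => rsubmx v 0 (wd i)) (rsubmx v 0 ord_max).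
Proof.
rewrite /Q_set /QN2; split => -[h1 h2 h3 h4 h5]; split => // k; have [hu hl] := h5 k.
  by rewrite -(UE k _ h1) -(LE k _ h1).
by rewrite (UE k _ h1) (LE k _ h1).
Qed.

Definition mk (x1 x2 mu : R) (w : 'rV[R]_(d1.+1)) : 'rV[R]_(3 + d1.+1) :=
  row_mx (\row_(j < 3) (if j == c0 then x1 else if j == c1 then x2 else mu)) w.

Lemma mk0 x1 x2 mu w : lsubmx (mk x1 x2 mu w) 0 c0 = x1.
Proof. by rewrite /mk row_mxKl mxE. Qed.
Lemma mk1 x1 x2 mu w : lsubmx (mk x1 x2 mu w) 0 c1 = x2.
Proof. by rewrite /mk row_mxKl mxE. Qed.
Lemma mk2 x1 x2 mu w : lsubmx (mk x1 x2 mu w) 0 c2 = mu.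
Proof. by rewrite /mk row_mxKl mxE. Qed.
Lemma mkr x1 x2 mu w : rsubmx (mk x1 x2 mu w) = w.
Proof. by rewrite /mk row_mxKr. Qed.

Lemma vE v : v = mk (lsubmx v 0 c0) (lsubmx v 0 c1) (lsubmx v 0 c2) (rsubmx v).
Proof.
rewrite -{1}[v]hsubmxK /mk; congr row_mx; apply/rowP => j; rewrite mxE.
case: j => [[|[|[|//]]] hj].
- by have -> : Ordinal hj = c0 by apply: val_inj.
- by have -> : Ordinal hj = c1 by apply: val_inj.
- by have -> : Ordinal hj = c2 by apply: val_inj.
Qed.

Lemma mk_comb t x1 x2 m w x1' x2' m' w' :
  t *: mk x1 x2 m w + (1 - t) *: mk x1' x2' m' w' =
  mk (t * x1 + (1 - t) * x1') (t * x2 + (1 - t) * x2') (t * m + (1 - t) * m') (t *: w + (1 - t) *: w').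
Proof.
rewrite /mk !scale_row_mx add_row_mx; congr row_mx; apply/rowP => j; rewrite !mxE.
by case: ifP => _; [|case: ifP].
Qed.

Lemma mono_all (z : 'I_d1 -> R) : (forall i j : 'I_d1, nat_of_ord j = i.+1 -> z j <= z i) ->
  forall i j : 'I_d1, (i <= j)%N -> z j <= z i.
Proof.
move=> hm i j hij; have : nat_of_ord j = (j - i + i)%N by rewrite subnK.
move: (j - i)%N => n; elim: n j {hij} => [|n IH] j hj.
  by have -> : j = i by apply: val_inj; rewrite /= hj add0n.
have hj' : (n + i < d1)%N by rewrite (leq_trans _ (ltn_ord j)) // hj addSn.
apply: (le_trans _ (IH (Ordinal hj') erefl)).
by apply: hm; rewrite hj addSn.
Qed.

Lemma exists_k (z : 'I_d1 -> R) c : (forall i j : 'I_d1, nat_of_ord j = i.+1 -> z j <= z i) ->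
  exists k : 'I_d1.+1, (forall i : 'I_d1, (i < k)%N -> c <= z i) /\
                       (forall i : 'I_d1, (k <= i)%N -> z i <= c).
Proof.
move=> /mono_all hm.
pose P n := (d1 <= n)%N || [exists i : 'I_d1, (nat_of_ord i == n) && (z i < c)].
have ex : exists n, P n by exists d1; rewrite /P leqnn.
case: (ex_minnP ex) => k Pk kmin.
have kle : (k <= d1)%N by apply: kmin; rewrite /P leqnn.
exists (Ordinal (kle : (k < d1.+1)%N)); split => i hi.
  rewrite leNgt; apply/negP => hlt.
  have Pi : P i by rewrite /P; apply/orP; right; apply/existsP; exists i; rewrite eqxx hlt.
  by have := kmin i Pi; rewrite leqNgt hi.
case/orP: Pk => [hd | /existsP [i' /andP [/eqP hi' hlt]]].
  by move: (ltn_ord i); rewrite ltnNge (leq_trans hd hi).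
apply/ltW/(le_lt_trans _ hlt)/hm; by rewrite hi'.
Qed.


Definition phi (a s u : R) := if u == a then u + s else u.

Lemma phi_avg a e u : 1/2 * phi a e u + (1 - 1/2) * phi a (-e) u = u.
Proof. rewrite /phi; case: eqP => _. all: clear hp1 hp2. all: lra. Qed.

Lemma phi_mono a e s u w : 0 <= e -> (s = e \/ s = -e) -> (u = a \/ e <= `|u - a|) ->
  (w = a \/ e <= `|w - a|) -> u <= w -> phi a s u <= phi a s w.
Proof.
rewrite /phi => he hs hu hw huw; case: eqP => eu; case: eqP => ew;
move: hu hw; rewrite !ler_normr; (case=> [hu|/orP[hu|hu]]); (case=> [hw|/orP[hw|hw]]);
try (by exfalso; auto); case: hs => hs; lra.
Qed.

Lemma phi_box a e s u : (s = e \/ s = -e) -> 0 <= e -> e <= a -> e <= 1 - a ->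
  0 <= u <= 1 -> 0 <= phi a s u <= 1.
Proof.
rewrite /phi => hs he ea ea1 /andP [u0 u1]; case: eqP => [->|_]; apply/andP; last by [].
by case: hs => ->; split; lra.
Qed.

Lemma core (w : 'I_d1.+1 -> R) (i0 : 'I_d1.+1) :
 (forall i, 0 <= w i <= 1) ->
 (forall i j : 'I_d1, nat_of_ord j = i.+1 -> w (wd j) <= w (wd i)) ->
 w i0 != 0 -> w i0 != 1 ->
 exists e, 0 < e /\ exists k : 'I_d1.+1,
  (forall i : 'I_d1, (i < k)%N -> w ord_max <= w (wd i)) /\
  (forall i : 'I_d1, (k <= i)%N -> w (wd i) <= w ord_max) /\
  forall s, (s = e \/ s = -e) ->
   (forall i, 0 <= phi (w i0) s (w i) <= 1) /\
   (forall i j : 'I_d1, nat_of_ord j = i.+1 -> phi (w i0) s (w (wd j)) <= phi (w i0) s (w (wd i))) /\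
   (forall i : 'I_d1, (i < k)%N -> phi (w i0) s (w ord_max) <= phi (w i0) s (w (wd i))) /\
   (forall i : 'I_d1, (k <= i)%N -> phi (w i0) s (w (wd i)) <= phi (w i0) s (w ord_max)).
Proof.
move=> hb hm h0 h1.
set a := w i0.
have a0 : 0 < a by have /andP[? ?] := hb i0; rewrite lt_def h0.
have a1 : a < 1 by have /andP[? ?] := hb i0; rewrite lt_def eq_sym h1.
pose gap u := if u == a then 1 else `|u - a|.
pose e := Order.min (Order.min a (1 - a)) (\big[Order.min/1]_(i : 'I_d1.+1) gap (w i)).
have e0 : 0 < e.
  rewrite /e !lt_min a0 subr_gt0 a1 /=; apply/bigmin_gtP; split => // i _.
  rewrite /gap; case: eqP => // /eqP; by rewrite normr_gt0 subr_eq0.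
have ea : e <= a by rewrite /e !ge_min lexx.
have ea1 : e <= 1 - a by rewrite /e !ge_min lexx orbT.
have G : forall i, w i = a \/ e <= `|w i - a|.
  move=> i; case: (eqVneq (w i) a) => [|hne]; [by left|right].
  have : gap (w i) = `|w i - a| by rewrite /gap (negbTE hne).
  move=> <-; rewrite /e ge_min; apply/orP; right; exact: bigmin_le.
have [k [hk1 hk2]] := exists_k (w ord_max) hm.
exists e; split => //; exists k; split => //; split => // s hs; split; [|split; [|split]].
- by move=> i; apply: (phi_box hs (ltW e0) ea ea1).
- by move=> i j hij; apply: (phi_mono (ltW e0) hs (G _) (G _) (hm _ _ hij)).
- by move=> i hi; apply: (phi_mono (ltW e0) hs (G _) (G _) (hk1 _ hi)).
- by move=> i hi; apply: (phi_mono (ltW e0) hs (G _) (G _) (hk2 _ hi)).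
Qed.


Lemma lin_x1 t (f g h : 'I_d1 -> R) : (forall i, t * f i + (1 - t) * g i = h i) ->
  t * (p1 ord0 + \sum_(i < d1) dp i * f i) + (1 - t) * (p1 ord0 + \sum_(i < d1) dp i * g i)
  = p1 ord0 + \sum_(i < d1) dp i * h i.
Proof.
move=> E.
have -> : \sum_(i < d1) dp i * h i = t * \sum_(i < d1) dp i * f i + (1 - t) * \sum_(i < d1) dp i * g i.
  rewrite !mulr_sumr -big_split; apply: eq_bigr => i _ /=; rewrite -E; ring.
ring.
Qed.

Lemma lin_Fk k t (f g h : 'I_d1 -> R) c c' : (forall i, t * f i + (1 - t) * g i = h i) ->
  t * Fk k f c + (1 - t) * Fk k g c' = Fk k h (t * c + (1 - t) * c').
Proof.
move=> E; rewrite /Fk.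
have -> : \sum_(i < d1 | (k <= i)%N) dp i * h i =
   t * \sum_(i < d1 | (k <= i)%N) dp i * f i + (1 - t) * \sum_(i < d1 | (k <= i)%N) dp i * g i.
  rewrite !mulr_sumr -big_split; apply: eq_bigr => i _ /=; rewrite -E; ring.
ring.
Qed.

Lemma wd_neq (i : 'I_d1) : (wd i == ord_max) = false.
Proof. by apply/negbTE; rewrite -val_eqE; change (nat_of_ord i != d1); rewrite neq_ltn ltn_ord. Qed.

Lemma ord_split (i : 'I_d1.+1) : i = ord_max \/ exists j : 'I_d1, i = wd j.
Proof.
case: (unliftP ord_max i) => [j ->|->]; last by left.
by right; exists j; apply: val_inj; exact: lift_max.
Qed.

Lemma half01 : 0 < (1/2 : R) < 1.
Proof. by apply/andP; split; lra. Qed.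

Lemma caseU v (i0 k0 : 'I_d1.+1) : Q_set p1 p20 p21 v ->
  lsubmx v 0 c2 = p20 * lsubmx v 0 c0 + (p21 - p20) * Fk k0 (fun i => rsubmx v 0 (wd i)) (rsubmx v 0 ord_max) ->
  rsubmx v 0 i0 != 0 -> rsubmx v 0 i0 != 1 -> ~ is_vertex (Q_set p1 p20 p21) v.
Proof.
move=> hQ hmu n0 n1 [_ hv].
have := hQ; rewrite QE => -[h1 [hb hm] h3 h4 h5].
have hbw : forall i, 0 <= rsubmx v 0 i <= 1.
  by move=> i; case: (ord_split i) => [->|[j ->]].
have [e [e0 [k [hk1 [hk2 hs]]]]] := core hbw hm n0 n1.
set a := rsubmx v 0 i0.
pose zs s i := phi a s (rsubmx v 0 (wd i)).
pose ys s := phi a s (rsubmx v 0 ord_max).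
pose x1s s := p1 ord0 + \sum_(i < d1) dp i * zs s i.
pose A s := mk (x1s s) (p20 + (p21 - p20) * ys s)
   (p20 * x1s s + (p21 - p20) * Fk k (zs s) (ys s)) (\row_i phi a s (rsubmx v 0 i)).
have hD : 0 < p21 - p20 by rewrite subr_gt0.
have QA : forall s, (s = e \/ s = -e) -> Q_set p1 p20 p21 (A s).
  move=> s hs'; have [hb' [hm' [ho1 ho2]]] := hs s hs'.
  rewrite QE mk0 mk1 mk2 mkr mxE.
  apply: (QN2_ext (z := zs s)); first by move=> i; rewrite mxE.
  split; [by [] | by split => [i|i j hij]; [exact: hb' | exact: hm'] | by [] | by apply: hb' | ].
  - move=> j; split.
      by rewrite lerD2l ler_pM2l //; apply: Fk_min => i hi; [exact: ho1|exact: ho2].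
    by apply: pair_ok => [i|]; [exact: hb' | exact: hb'].
have hmu' : lsubmx v 0 c2 = p20 * lsubmx v 0 c0 + (p21 - p20) * Fk k (fun i => rsubmx v 0 (wd i)) (rsubmx v 0 ord_max).
  apply/eqP; rewrite eq_le; apply/andP; split; first by case: (h5 k).
  by rewrite hmu lerD2l ler_pM2l //; apply: Fk_min => i hi; [exact: hk1|exact: hk2].
have X1 : 1/2 * x1s e + (1 - 1/2) * x1s (-e) = lsubmx v 0 c0.
  have E : forall i, 1/2 * zs e i + (1 - 1/2) * zs (-e) i = rsubmx v 0 (wd i) by move=> i; rewrite /zs phi_avg.
  by rewrite /x1s (lin_x1 E) h1.
have Y1 : 1/2 * ys e + (1 - 1/2) * ys (-e) = rsubmx v 0 ord_max by rewrite /ys phi_avg.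
have F1 : 1/2 * Fk k (zs e) (ys e) + (1 - 1/2) * Fk k (zs (-e)) (ys (-e))
          = Fk k (fun i => rsubmx v 0 (wd i)) (rsubmx v 0 ord_max).
  have E : forall i, 1/2 * zs e i + (1 - 1/2) * zs (-e) i = rsubmx v 0 (wd i) by move=> i; rewrite /zs phi_avg.
  by rewrite (lin_Fk _ _ _ E) Y1.
have Veq : v = 1/2 *: A e + (1 - 1/2) *: A (-e).
  rewrite mk_comb {1}(vE v); congr mk.
  - by rewrite X1.
  - by rewrite h3 -Y1; ring.
  - by rewrite hmu' -X1 -F1; ring.
  - by apply/rowP => i; rewrite !mxE phi_avg.
have := hv (A e) (A (-e)) (1/2) (QA e (or_introl erefl)) (QA (-e) (or_intror erefl)) half01 Veq.
move=> /(congr1 (fun M => rsubmx M 0 i0)); rewrite /A !mkr mxE [in RHS]mxE /phi.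
rewrite /a eqxx => H; lra.
Qed.


Definition flipw (r : 'I_d1.+1 -> R) i := if i == ord_max then 1 - r i else r i.

Lemma caseL v (i0 k0 : 'I_d1.+1) : Q_set p1 p20 p21 v ->
  lsubmx v 0 c2 = p21 * lsubmx v 0 c0 - (p21 - p20) * Fk k0 (fun i => rsubmx v 0 (wd i)) (1 - rsubmx v 0 ord_max) ->
  rsubmx v 0 i0 != 0 -> rsubmx v 0 i0 != 1 -> ~ is_vertex (Q_set p1 p20 p21) v.
Proof.
move=> hQ hmu n0 n1 [_ hv].
have := hQ; rewrite QE => -[h1 [hb hm] h3 h4 h5].
pose w := flipw (rsubmx v 0).
have wE : forall i, w (wd i) = rsubmx v 0 (wd i) by move=> i; rewrite /w /flipw wd_neq.
have wM : w ord_max = 1 - rsubmx v 0 ord_max by rewrite /w /flipw eqxx.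
have hbw : forall i, 0 <= w i <= 1.
  move=> i; case: (ord_split i) => [->|[j ->]]; last by rewrite wE.
  by rewrite wM; case/andP: h4 => ? ?; apply/andP; split; lra.
have hmw : forall i j : 'I_d1, nat_of_ord j = i.+1 -> w (wd j) <= w (wd i).
  by move=> i j hij; rewrite !wE; apply: hm.
have n0' : w i0 != 0.
  rewrite /w /flipw; case: ifP => _ //.
  by apply: contra n1 => /eqP H; apply/eqP; lra.
have n1' : w i0 != 1.
  rewrite /w /flipw; case: ifP => _ //.
  by apply: contra n0 => /eqP H; apply/eqP; lra.
have [e [e0 [k [hk1 [hk2 hs]]]]] := core hbw hmw n0' n1'.
set a := w i0.
pose zs s i := phi a s (w (wd i)).
pose cs s := phi a s (w ord_max).
pose x1s s := p1 ord0 + \sum_(i < d1) dp i * zs s i.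
pose A s := mk (x1s s) (p20 + (p21 - p20) * (1 - cs s))
   (p21 * x1s s - (p21 - p20) * Fk k (zs s) (cs s))
   (\row_i if i == ord_max then 1 - phi a s (w i) else phi a s (w i)).
have hD : 0 < p21 - p20 by rewrite subr_gt0.
have QA : forall s, (s = e \/ s = -e) -> Q_set p1 p20 p21 (A s).
  move=> s hs'; have [hb' [hm' [ho1 ho2]]] := hs s hs'.
  have E1 : 1 - (1 - cs s) = cs s by ring.
  have zb : forall i, 0 <= zs s i <= 1 by move=> i; apply: hb'.
  have yb : 0 <= 1 - cs s <= 1 by have /andP [? ?] := hb' ord_max; apply/andP; rewrite /cs; split; lra.
  rewrite QE mk0 mk1 mk2 mkr mxE eqxx.
  apply: (QN2_ext (z := zs s)); first by move=> i; rewrite mxE wd_neq.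
  split; [by [] | by split => [i|i j hij]; [exact: hb' | exact: hm'] | by [] | exact: yb | ].
  move=> j; split.
    by have := pair_ok j k zb yb; rewrite E1.
  rewrite E1 lerD2l lerN2 ler_pM2l //.
  by apply: Fk_min => i hi; [exact: ho1|exact: ho2].
have hmu' : lsubmx v 0 c2 = p21 * lsubmx v 0 c0 - (p21 - p20) * Fk k (fun i => rsubmx v 0 (wd i)) (1 - rsubmx v 0 ord_max).
  apply/eqP; rewrite eq_le; apply/andP; split; last by case: (h5 k).
  rewrite hmu lerD2l lerN2 ler_pM2l //; apply: Fk_min => i hi.
    by have := hk1 i hi; rewrite wM wE.
  by have := hk2 i hi; rewrite wM wE.
have E : forall i, 1/2 * zs e i + (1 - 1/2) * zs (-e) i = rsubmx v 0 (wd i).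
  by move=> i; rewrite /zs phi_avg wE.
have X1 : 1/2 * x1s e + (1 - 1/2) * x1s (-e) = lsubmx v 0 c0 by rewrite /x1s (lin_x1 E) h1.
have C1 : 1/2 * cs e + (1 - 1/2) * cs (-e) = 1 - rsubmx v 0 ord_max by rewrite /cs phi_avg wM.
have F1 : 1/2 * Fk k (zs e) (cs e) + (1 - 1/2) * Fk k (zs (-e)) (cs (-e))
          = Fk k (fun i => rsubmx v 0 (wd i)) (1 - rsubmx v 0 ord_max).
  by rewrite (lin_Fk _ _ _ E) C1.
have Veq : v = 1/2 *: A e + (1 - 1/2) *: A (-e).
  rewrite mk_comb {1}(vE v); congr mk.
  - by rewrite X1.
  - rewrite h3; move: C1; set c1' := cs e; set c2' := cs (-e) => C1.
    have -> : rsubmx v 0 ord_max = 1 - (1/2 * c1' + (1 - 1/2) * c2') by rewrite C1; ring.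
    ring.
  - by rewrite hmu' -X1 -F1; ring.
  - apply/rowP => i; rewrite ![in RHS]mxE.
    case: (ord_split i) => [->|[j ->]].
      rewrite eqxx; have P := phi_avg a e (w ord_max); move: P wM.
      set q1 := phi a e _; set q2 := phi a (-e) _; set y0 := w ord_max; move=> P wM'; lra.
    rewrite wd_neq; have P := phi_avg a e (w (wd j)); have := wE j.
    move: P; set q1 := phi a e _; set q2 := phi a (-e) _; set y0 := w (wd j) => P wE'; lra.
have := hv (A e) (A (-e)) (1/2) (QA e (or_introl erefl)) (QA (-e) (or_intror erefl)) half01 Veq.
move=> /(congr1 (fun M => rsubmx M 0 i0)); rewrite /A !mkr mxE [in RHS]mxE /phi.
rewrite /a eqxx; case: (i0 == ord_max) => H; lra.
Qed.


Lemma caseS v : Q_set p1 p20 p21 v ->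
  (forall k, lsubmx v 0 c2 < p20 * lsubmx v 0 c0 + (p21 - p20) * Fk k (fun i => rsubmx v 0 (wd i)) (rsubmx v 0 ord_max) /\
             p21 * lsubmx v 0 c0 - (p21 - p20) * Fk k (fun i => rsubmx v 0 (wd i)) (1 - rsubmx v 0 ord_max) < lsubmx v 0 c2) ->
  ~ is_vertex (Q_set p1 p20 p21) v.
Proof.
move=> hQ hst [_ hv].
have := hQ; rewrite QE => -[h1 hbm h3 h4 h5].
set mu := lsubmx v 0 c2.
pose U k := p20 * lsubmx v 0 c0 + (p21 - p20) * Fk k (fun i => rsubmx v 0 (wd i)) (rsubmx v 0 ord_max).
pose L k := p21 * lsubmx v 0 c0 - (p21 - p20) * Fk k (fun i => rsubmx v 0 (wd i)) (1 - rsubmx v 0 ord_max).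
pose gapk k := Order.min (U k - mu) (mu - L k).
pose e := \big[Order.min/1]_k gapk k.
have e0 : 0 < e.
  apply/bigmin_gtP; split => // k _; rewrite lt_min !subr_gt0.
  by have [? ?] := hst k; apply/andP.
have hek : forall k, e <= U k - mu /\ e <= mu - L k.
  by move=> k; have := bigmin_le 1 k gapk; rewrite le_min => /andP [].
clearbody e.
pose A s := mk (lsubmx v 0 c0) (lsubmx v 0 c1) (mu + s) (rsubmx v).
have QA : forall s, (s = e \/ s = -e) -> Q_set p1 p20 p21 (A s).
  move=> s hs; rewrite QE mk0 mk1 mk2 mkr; split => // k.
  have [ha hb] := hek k; move: ha hb; rewrite /U /L.
  set u := p20 * _ + _; set l := p21 * _ - _ => ha hb.
  by case: hs => ->; split; lra.
have Veq : v = 1/2 *: A e + (1 - 1/2) *: A (-e).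
  rewrite mk_comb {1}(vE v); congr mk; try ring.
  - have H : forall m e1 : R, m = 1/2 * (m + e1) + (1 - 1/2) * (m - e1) by move=> m e1; lra.
    exact: H.
  - by rewrite -scalerDl addrC subrK scale1r.
have := hv (A e) (A (-e)) (1/2) (QA e (or_introl erefl)) (QA (-e) (or_intror erefl)) half01 Veq.
move=> /(congr1 (fun M => lsubmx M 0 c2)); rewrite /A !mk2 => H; lra.
Qed.

Lemma ideal_part : ideal_formulation (Q_set p1 p20 p21).
Proof.
move=> v hv i.
case: (eqVneq (rsubmx v 0 i) 0) => [->|n0]; first by left.
case: (eqVneq (rsubmx v 0 i) 1) => [->|n1]; first by right.
exfalso; have hQ := hv.1.
case: (boolP [exists k, lsubmx v 0 c2 == p20 * lsubmx v 0 c0 + (p21 - p20) * Fk k (fun i => rsubmx v 0 (wd i)) (rsubmx v 0 ord_max)]).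
  by move=> /existsP [k /eqP hk]; exact: (caseU hQ hk n0 n1 hv).
move=> /existsPn hU.
case: (boolP [exists k, lsubmx v 0 c2 == p21 * lsubmx v 0 c0 - (p21 - p20) * Fk k (fun i => rsubmx v 0 (wd i)) (1 - rsubmx v 0 ord_max)]).
  by move=> /existsP [k /eqP hk]; exact: (caseL hQ hk n0 n1 hv).
move=> /existsPn hL.
apply: (caseS hQ _ hv) => k; have := hQ; rewrite QE => -[_ _ _ _ h5].
have [a b] := h5 k; split.
  by rewrite lt_neqAle a andbT hU.
by rewrite lt_neqAle b andbT eq_sym hL.
Qed.

Lemma bin_le (k j : 'I_d1.+1) c : 0 <= c <= 1 ->
  p1 k * c <= Fk j (fun i : 'I_d1 => if (i < k)%N then 1 else 0) c.
Proof.
move=> /andP [c0' c1'].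
rewrite FkE (tel k) mulrDl lerD2l mulr_suml big_mkcond /=; apply: ler_sum => i _.
case: ifP => hik.
  by rewrite ler_pM2l ?dp_gt0 //; case: ifP.
by apply: mulr_ge0; [exact: ltW (dp_gt0 i)| case: ifP].
Qed.

Lemma mip_part : mip_formulation (S_set p1 p20 p21) (Q_set p1 p20 p21).
Proof.
have hD : 0 < p21 - p20 by rewrite subr_gt0.
move=> x; split.
  case=> hmu [[k hk] hx2].
  pose yb : R := if x 0 c1 == p21 then 1 else 0.
  have ybb : 0 <= yb <= 1 by rewrite /yb; case: ifP; rewrite ?lexx ?ler01.
  have X2 : x 0 c1 = p20 + (p21 - p20) * yb.
    rewrite /yb; case: eqP => h; first by rewrite h; ring.
    by case: hx2 => // ->; ring.
  exists (\row_i if i == ord_max then yb else (if (i < k)%N then 1 else 0)); split.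
    move=> i; rewrite mxE; case: ifP => _; first by rewrite /yb; case: ifP; auto.
    by case: ifP; auto.
  rewrite QE row_mxKl row_mxKr mxE eqxx.
  apply: (QN2_ext (z := fun i : 'I_d1 => if (i < k)%N then 1 else 0)); first by move=> i; rewrite mxE wd_neq.
  split => //.
  - rewrite hk {1}(tel k) big_mkcond; congr (_ + _); apply: eq_bigr => i _.
    by case: ifP => _; rewrite ?mulr1 ?mulr0.
  - split => [i|i j hij]; first by case: ifP; rewrite ?lexx ?ler01.
    case: (ltnP j k) => hj.
      by have -> : (i < k)%N by rewrite (ltn_trans _ hj) // hij.
    by case: ifP; rewrite ?lexx ?ler01.
  - move=> j; rewrite hmu hk X2; split.
      have -> : p1 k * (p20 + (p21 - p20) * yb) = p20 * p1 k + (p21 - p20) * (p1 k * yb) by ring.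
      by rewrite lerD2l ler_pM2l //; apply: bin_le.
    have -> : p1 k * (p20 + (p21 - p20) * yb) = p21 * p1 k - (p21 - p20) * (p1 k * (1 - yb)) by ring.
    rewrite lerD2l lerN2 ler_pM2l //; apply: bin_le.
    by case/andP: ybb => ? ?; apply/andP; split; lra.
case=> zr [hbin]; rewrite QE row_mxKl row_mxKr => -[h1 [hb hm] h3 h4 h5].
have [k [hk1 hk2]] := exists_k (1/2) hm.
have zk : forall i : 'I_d1, zr 0 (wd i) = if (i < k)%N then 1 else 0.
  move=> i; case: ifP => hi.
    by have := hk1 i hi; case: (hbin (wd i)) => -> H //; lra.
  by have := hk2 i ltac:(by rewrite leqNgt hi); case: (hbin (wd i)) => -> H //; lra.
have x0k : x 0 c0 = p1 k.
  rewrite h1 (tel k) [in RHS]big_mkcond; congr (_ + _); apply: eq_bigr => i _.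
  by rewrite zk; case: ifP => _; rewrite ?mulr1 ?mulr0.
have Fkk : forall c, Fk k (fun i => zr 0 (wd i)) c = p1 k * c.
  move=> c; rewrite /Fk big1 ?addr0 // => i hi.
  by rewrite zk ltnNge hi /= mulr0.
have [hu hl] := h5 k; rewrite !Fkk x0k in hu hl.
split.
  rewrite x0k h3; apply/eqP; rewrite eq_le; apply/andP; split.
    by move: hu; set y := zr 0 ord_max; set m := x 0 c2;
       have -> : p20 * p1 k + (p21 - p20) * (p1 k * y) = p1 k * (p20 + (p21 - p20) * y) by ring.
  by move: hl; set y := zr 0 ord_max; set m := x 0 c2;
     have -> : p21 * p1 k - (p21 - p20) * (p1 k * (1 - y)) = p1 k * (p20 + (p21 - p20) * y) by ring.
split; first by exists k.
rewrite h3; case: (hbin ord_max) => ->; [left|right]; ring.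
Qed.

End P.

Theorem proposition2 (R : realFieldType) (d1 : nat) (hd1 : (0 < d1)%N)
    (p1 : 'I_d1.+1 -> R) (p20 p21 : R)
    (hp1 : forall i j : 'I_d1.+1, (i < j)%N -> p1 i < p1 j)
    (hp2 : p20 < p21) :
  mip_formulation (S_set p1 p20 p21) (Q_set p1 p20 p21) /\
  ideal_formulation (Q_set p1 p20 p21).
Proof.
split; [exact: (mip_part hp1 hp2) | exact: (ideal_part hp1 hp2)].
Qed.
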